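(* Let $n\ge 2$ be an integer. A relative equilibrium of the Newtonian planar $(1+2n)$-body problem whose configuration consists of a central mass at the origin surrounded by two homothetic regular $n$-gons, with vertices $\rho_1e^{2\pi i l/n}$ and $\rho_2e^{2\pi i l/n}$ ($l=0,\dots,n-1$, $0<\rho_1<\rho_2$), is never really perverse.
   Context: The Newtonian planar $N$-body problem (gravitational constant $1$): bodies with masses $\mu_i>0$ at positions $r_i\in\mathbb{C}$ satisfy $\mu_i\ddot r_i=\sum_{j\ne i}\mu_i\mu_j\,\frac{r_j-r_i}{|r_j-r_i|^3}$. A relative equilibrium (angular velocity $1$) is a motion $r_i(t)=r_ie^{it}$ that is a solution. A mass system for this configuration is a vector $(m_0,m_1,m_2)$ of positive numbers: mass $m_0$ at the center and mass $m_j$ at every vertex of the $j$-th polygon; total mass $m_0+n(m_1+m_2)$, center of mass at the origin. The relative equilibrium is really perverse if there exist two distinct mass systems with the same total mass and the same center of mass for each of which $r_i(t)=r_ie^{it}$ is a solution. *)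

(* Defs.v *)
From Stdlib Require Import Reals Lra Lia.
From Coquelicot Require Import Coquelicot.
Open Scope R_scope.

(* Planar (1+2n)-body configuration: bodies are indexed by k = 0 .. 2n.
   k = 0 : central body at the origin;
   k = 1 .. n : vertex rho1 * e^{2 pi i (k-1)/n} of the first n-gon;
   k = n+1 .. 2n : vertex rho2 * e^{2 pi i (k-n-1)/n} of the second n-gon.
   Points of C are represented by their (real, imaginary) parts. *)

Definition vertex (n : nat) (rho : R) (l : nat) : R * R :=
  (rho * cos (2 * PI * INR l / INR n), rho * sin (2 * PI * INR l / INR n)).

Definition pos (n : nat) (rho1 rho2 : R) (k : nat) : R * R :=
  if Nat.eqb k 0 then (0, 0)
  else if Nat.leb k n then vertex n rho1 (k - 1)
  else vertex n rho2 (k - n - 1).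

Definition mass (n : nat) (m0 m1 m2 : R) (k : nat) : R :=
  if Nat.eqb k 0 then m0 else if Nat.leb k n then m1 else m2.

(* the motion r_k(t) = r_k e^{it}, real and imaginary parts *)
Definition motx (n : nat) (rho1 rho2 : R) (k : nat) (t : R) : R :=
  fst (pos n rho1 rho2 k) * cos t - snd (pos n rho1 rho2 k) * sin t.
Definition moty (n : nat) (rho1 rho2 : R) (k : nat) (t : R) : R :=
  fst (pos n rho1 rho2 k) * sin t + snd (pos n rho1 rho2 k) * cos t.

Definition dist_at (n : nat) (rho1 rho2 : R) (k j : nat) (t : R) : R :=
  sqrt ((motx n rho1 rho2 j t - motx n rho1 rho2 k t) ^ 2
        + (moty n rho1 rho2 j t - moty n rho1 rho2 k t) ^ 2).

Definition force (n : nat) (rho1 rho2 m0 m1 m2 : R)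
  (c : nat -> R -> R) (k : nat) (t : R) : R :=
  sum_f_R0 (fun j =>
    if Nat.eqb j k then 0
    else mass n m0 m1 m2 k * mass n m0 m1 m2 j * (c j t - c k t)
           / (dist_at n rho1 rho2 k j t) ^ 3) (2 * n).

Definition is_solution (n : nat) (rho1 rho2 m0 m1 m2 : R) : Prop :=
  forall (k : nat) (t : R), (k <= 2 * n)%nat ->
    mass n m0 m1 m2 k * Derive_n (motx n rho1 rho2 k) 2 t
      = force n rho1 rho2 m0 m1 m2 (motx n rho1 rho2) k t /\
    mass n m0 m1 m2 k * Derive_n (moty n rho1 rho2 k) 2 t
      = force n rho1 rho2 m0 m1 m2 (moty n rho1 rho2) k t.

Definition total_mass (n : nat) (m0 m1 m2 : R) : R := m0 + INR n * (m1 + m2).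

Definition com (n : nat) (rho1 rho2 m0 m1 m2 : R) : R * R :=
  (sum_f_R0 (fun k => mass n m0 m1 m2 k * fst (pos n rho1 rho2 k)) (2 * n)
     / total_mass n m0 m1 m2,
   sum_f_R0 (fun k => mass n m0 m1 m2 k * snd (pos n rho1 rho2 k)) (2 * n)
     / total_mass n m0 m1 m2).

Definition mass_system (n : nat) (rho1 rho2 m0 m1 m2 : R) : Prop :=
  0 < m0 /\ 0 < m1 /\ 0 < m2 /\ com n rho1 rho2 m0 m1 m2 = (0, 0).

Definition really_perverse (n : nat) (rho1 rho2 : R) : Prop :=
  exists m0 m1 m2 m0' m1' m2' : R,
    mass_system n rho1 rho2 m0 m1 m2 /\ mass_system n rho1 rho2 m0' m1' m2' /\
    (m0, m1, m2) <> (m0', m1', m2') /\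
    total_mass n m0 m1 m2 = total_mass n m0' m1' m2' /\
    com n rho1 rho2 m0 m1 m2 = com n rho1 rho2 m0' m1' m2' /\
    is_solution n rho1 rho2 m0 m1 m2 /\ is_solution n rho1 rho2 m0' m1' m2'.

(* Main.v *)
Require Import Defs.
From Stdlib Require Import Reals Lra Lia.
From Coquelicot Require Import Coquelicot.
Require Import Defs.
Open Scope R_scope.

Fixpoint bb (k : nat) : R :=
  match k with O => 1 | S j => bb j * (2 * INR j + 1) / (2 * INR j + 2) end.

Lemma bb_pos k : 0 < bb k.
Proof.
  induction k; simpl bb. lra.
  pose proof (pos_INR k).
  apply Rmult_lt_0_compat; [apply Rmult_lt_0_compat; lra| apply Rinv_0_lt_compat; lra].
Qed.

Lemma bb_le1 k : bb k <= 1.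
Proof.
  induction k; simpl bb. lra.
  pose proof (pos_INR k). pose proof (bb_pos k).
  unfold Rdiv. rewrite Rmult_assoc.
  assert ((2 * INR k + 1) * / (2 * INR k + 2) <= 1).
  { apply (Rmult_le_reg_r (2 * INR k + 2)). lra.
    rewrite Rmult_assoc, Rinv_l by lra. lra. }
  assert (0 <= (2 * INR k + 1) * / (2 * INR k + 2)).
  { apply Rmult_le_pos. lra. left; apply Rinv_0_lt_compat; lra. }
  nra.
Qed.

Lemma bb_S k : INR (S k) * bb (S k) = bb k * (2 * INR k + 1) / 2.
Proof.
  simpl bb. rewrite S_INR. pose proof (pos_INR k). field. lra.
Qed.

Definition conv (m : nat) := sum_f_R0 (fun k => bb k * bb (m - k)) m.
Definition EE (m : nat) := sum_f_R0 (fun k => INR k * bb k * bb (m - k)) m.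

Lemma EE_sym m : 2 * EE m = INR m * conv m.
Proof.
  unfold EE, conv.
  assert (H : sum_f_R0 (fun k => INR k * bb k * bb (m - k)) m =
              sum_f_R0 (fun k => INR (m - k) * bb (m - k) * bb k) m).
  { rewrite <- (sum_f_R0_skip (fun k => INR k * bb k * bb (m - k))).
    apply sum_eq; intros i Hi. replace (m - (m - i))%nat with i by lia. reflexivity. }
  replace (2 * sum_f_R0 (fun k => INR k * bb k * bb (m - k)) m) with
    (sum_f_R0 (fun k => INR k * bb k * bb (m - k)) m +
     sum_f_R0 (fun k => INR (m - k) * bb (m - k) * bb k) m) by (rewrite <- H; ring).
  rewrite <- plus_sum, scal_sum. apply sum_eq; intros i Hi.
  rewrite minus_INR by lia. ring.
Qed.

Lemma EE_S m : EE (S m) = EE m + conv m / 2.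
Proof.
  unfold EE, conv. rewrite decomp_sum by lia. simpl Init.Nat.pred.
  replace (INR 0 * bb 0 * bb (S m - 0)) with 0 by (simpl; ring).
  rewrite Rplus_0_l.
  unfold Rdiv. rewrite (Rmult_comm _ (/ 2)), scal_sum, <- plus_sum.
  apply sum_eq; intros i Hi.
  replace (S m - S i)%nat with (m - i)%nat by lia.
  replace (INR (S i) * bb (S i) * bb (m - i)) with ((INR (S i) * bb (S i)) * bb (m - i)) by ring.
  rewrite bb_S. field.
Qed.

Lemma conv_1 m : conv m = 1.
Proof.
  induction m.
  - unfold conv; simpl. ring.
  - pose proof (EE_sym m) as H1. pose proof (EE_sym (S m)) as H2.
    rewrite EE_S in H2. rewrite S_INR in H2. rewrite IHm in *.
    pose proof (pos_INR m).
    assert (INR m + 1 <> 0) by lra.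
    apply (Rmult_eq_reg_l (INR m + 1)); [|lra]. lra.
Qed.

Lemma ser_of_lim (a : nat -> R) (l : R) : is_lim_seq (fun N => sum_f_R0 a N) l -> is_series a l.
Proof.
  intro H. apply (is_lim_seq_ext _ (sum_n a)) in H.
  exact H. intro; now rewrite sum_n_Reals.
Qed.

Lemma lim_pow_bound (u : nat -> R) (x : R) : 0 <= x < 1 ->
  (forall N, Rabs (u N) <= x ^ N) -> is_lim_seq u 0.
Proof.
  intros Hx Hu.
  apply is_lim_seq_le_le with (u := fun N => - x ^ N) (w := fun N => x ^ N).
  - intro N; specialize (Hu N). apply Rabs_le_between in Hu. lra.
  - replace (Finite 0) with (Rbar_opp 0) by (simpl; f_equal; ring).
    apply -> is_lim_seq_opp. apply is_lim_seq_geom. rewrite Rabs_pos_eq; lra.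
  - apply is_lim_seq_geom. rewrite Rabs_pos_eq; lra.
Qed.

Section Geo.
Variables x th : R.
Hypothesis Hx : 0 <= x < 1.
Let c := cos th.
Let s := sin th.
Definition Cm (m : nat) := x ^ m * cos (INR m * th).
Definition Sm (m : nat) := x ^ m * sin (INR m * th).

Lemma geo_fin N :
  (1 - x * c) * sum_f_R0 Cm N + x * s * sum_f_R0 Sm N = 1 - Cm (S N) /\
  - (x * s) * sum_f_R0 Cm N + (1 - x * c) * sum_f_R0 Sm N = - Sm (S N).
Proof.
  assert (Hrec : forall m, Cm (S m) = x * (Cm m * c - Sm m * s) /\
                           Sm (S m) = x * (Sm m * c + Cm m * s)).
  { intro m. unfold Cm, Sm. rewrite S_INR.
    replace ((INR m + 1) * th) with (INR m * th + th) by ring.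
    rewrite cos_plus, sin_plus. unfold c, s. simpl pow. split; ring. }
  induction N.
  - simpl sum_f_R0. destruct (Hrec 0%nat) as [H1 H2]. rewrite H1, H2.
    unfold Cm, Sm. simpl. rewrite Rmult_0_l, cos_0, sin_0. split; ring.
  - rewrite !tech5. destruct (Hrec (S N)) as [H1 H2]. rewrite H1, H2.
    destruct IHN as [I1 I2]. split; nra.
Qed.

Lemma D2_pos : 0 < 1 - 2 * x * c + x ^ 2.
Proof.
  assert (c <= 1) by apply COS_bound.
  destruct (Req_dec x 0). subst. simpl. lra.
  nra.
Qed.

Lemma Cm_lim : is_lim_seq (fun N => Cm (S N)) 0.
Proof.
  apply (lim_pow_bound _ x Hx). intro N. unfold Cm.
  rewrite Rabs_mult, Rabs_pos_eq by (apply pow_le; lra).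
  assert (x ^ S N <= x ^ N) by (simpl; pose proof (pow_le x N); nra).
  pose proof (pow_le x (S N) ltac:(lra)).
  assert (Rabs (cos (INR (S N) * th)) <= 1) by apply Rabs_le, COS_bound. nra.
Qed.

Lemma Sm_lim : is_lim_seq (fun N => Sm (S N)) 0.
Proof.
  apply (lim_pow_bound _ x Hx). intro N. unfold Sm.
  rewrite Rabs_mult, Rabs_pos_eq by (apply pow_le; lra).
  assert (x ^ S N <= x ^ N) by (simpl; pose proof (pow_le x N); nra).
  pose proof (pow_le x (S N) ltac:(lra)).
  assert (Rabs (sin (INR (S N) * th)) <= 1) by apply Rabs_le, SIN_bound. nra.
Qed.

Lemma cs1 : c ^ 2 + s ^ 2 = 1.
Proof. unfold c, s. rewrite <- (sin2_cos2 th). unfold Rsqr. ring. Qed.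

Lemma lim_eq (u : nat -> R) (l l' : R) : is_lim_seq u l -> l = l' -> is_lim_seq u l'.
Proof. intros H ->; exact H. Qed.

Lemma Cm_series : is_series Cm ((1 - x * c) / (1 - 2 * x * c + x ^ 2)).
Proof.
  pose proof D2_pos as HD. apply ser_of_lim.
  assert (Hab : (1 - x * c) * (1 - x * c) + (x * s) * (x * s) = 1 - 2 * x * c + x ^ 2).
  { pose proof cs1. nra. }
  apply (is_lim_seq_ext (fun N => ((1 - x * c) * (1 - Cm (S N)) - (x * s) * (- Sm (S N))) / (1 - 2 * x * c + x ^ 2))).
  - intro N. destruct (geo_fin N) as [E1 E2].
    rewrite <- E1, <- E2, <- Hab. field. lra.
  - eapply lim_eq.
    + unfold Rdiv. eapply is_lim_seq_mult'; [|apply is_lim_seq_const].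
      eapply is_lim_seq_minus'; eapply is_lim_seq_mult'; try apply is_lim_seq_const.
      * eapply is_lim_seq_minus'. apply is_lim_seq_const. apply Cm_lim.
      * pose proof Sm_lim as HS. apply (is_lim_seq_opp _ 0) in HS. exact HS.
    + simpl. field. lra.
Qed.

Lemma Sm_series : is_series Sm (x * s / (1 - 2 * x * c + x ^ 2)).
Proof.
  pose proof D2_pos as HD. apply ser_of_lim.
  assert (Hab : (1 - x * c) * (1 - x * c) + (x * s) * (x * s) = 1 - 2 * x * c + x ^ 2).
  { pose proof cs1. nra. }
  apply (is_lim_seq_ext (fun N => ((x * s) * (1 - Cm (S N)) + (1 - x * c) * (- Sm (S N))) / (1 - 2 * x * c + x ^ 2))).
  - intro N. destruct (geo_fin N) as [E1 E2].
    rewrite <- E1, <- E2, <- Hab. field. lra.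
  - eapply lim_eq.
    + unfold Rdiv. eapply is_lim_seq_mult'; [|apply is_lim_seq_const].
      eapply is_lim_seq_plus'; eapply is_lim_seq_mult'; try apply is_lim_seq_const.
      * eapply is_lim_seq_minus'. apply is_lim_seq_const. apply Cm_lim.
      * pose proof Sm_lim as HS. apply (is_lim_seq_opp _ 0) in HS. exact HS.
    + simpl. field. lra.
Qed.
End Geo.

Section Leg.
Variables x th : R.
Hypothesis Hx : 0 <= x < 1.

Definition ak (k : nat) := bb k * x ^ k * cos (INR k * th).
Definition bk (k : nat) := bb k * x ^ k * sin (INR k * th).

Lemma abs_bound (f : nat -> R) : (forall k, Rabs (f k) <= 1) ->
  ex_series (fun k => Rabs (bb k * x ^ k * f k)).
Proof.
  intro Hf. apply (@ex_series_le R_AbsRing R_CompleteNormedModule _ (fun k => x ^ k)).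
  - intro k. change (norm (Rabs (bb k * x ^ k * f k))) with (Rabs (Rabs (bb k * x ^ k * f k))).
    rewrite Rabs_Rabsolu, !Rabs_mult, (Rabs_pos_eq (bb k)) by (left; apply bb_pos).
    rewrite (Rabs_pos_eq (x ^ k)) by (apply pow_le; lra).
    pose proof (bb_pos k); pose proof (bb_le1 k); pose proof (pow_le x k ltac:(lra)).
    specialize (Hf k). pose proof (Rabs_pos (f k)).
    assert (bb k * x ^ k <= x ^ k) by nra. nra.
  - apply ex_series_geom. rewrite Rabs_pos_eq; lra.
Qed.

Lemma ak_abs : ex_series (fun k => Rabs (ak k)).
Proof. apply abs_bound. intro; apply Rabs_le, COS_bound. Qed.
Lemma bk_abs : ex_series (fun k => Rabs (bk k)).
Proof. apply abs_bound. intro; apply Rabs_le, SIN_bound. Qed.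

Definition AA := Series ak.
Definition BB := Series bk.
Lemma ak_ser : is_series ak AA.
Proof. apply Series_correct, ex_series_Rabs, ak_abs. Qed.
Lemma bk_ser : is_series bk BB.
Proof. apply Series_correct, ex_series_Rabs, bk_abs. Qed.

Definition Lm (m : nat) :=
  x ^ m * sum_f_R0 (fun k => bb k * bb (m - k) * cos ((INR k - INR (m - k)) * th)) m.

Lemma conv_gen (g : nat -> nat -> R) (h : nat -> R) m :
  (forall k, (k <= m)%nat -> g k (m - k)%nat = bb k * bb (m - k) * h m) ->
  sum_f_R0 (fun k => g k (m - k)%nat) m = h m.
Proof.
  intro H. rewrite (sum_eq _ (fun k => (bb k * bb (m - k)) * h m)).
  - rewrite <- scal_sum. fold (conv m). rewrite conv_1. ring.
  - intros i Hi. rewrite H by lia. ring.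
Qed.

Lemma split_ang k m : (k <= m)%nat -> INR k * th + INR (m - k) * th = INR m * th.
Proof. intro. rewrite minus_INR by lia. ring. Qed.

Lemma powsplit k m : (k <= m)%nat -> x ^ k * x ^ (m - k) = x ^ m.
Proof. intro. rewrite <- pow_add. f_equal. lia. Qed.

Lemma AB_minus : AA * AA - BB * BB = (1 - x * cos th) / (1 - 2 * x * cos th + x ^ 2).
Proof.
  pose proof (is_series_mult _ _ _ _ ak_ser ak_ser ak_abs ak_abs) as H1.
  pose proof (is_series_mult _ _ _ _ bk_ser bk_ser bk_abs bk_abs) as H2.
  pose proof (is_series_minus _ _ _ _ H1 H2) as H3.
  assert (H4 : is_series (Cm x th) (AA * AA - BB * BB)).
  { eapply is_series_ext; [|exact H3].
    intro m. change (plus ?a (opp ?b)) with (a - b). cbv beta. rewrite <- minus_sum.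
    apply (conv_gen (fun k j => ak k * ak j - bk k * bk j) (Cm x th)).
    intros k Hk. unfold ak, bk, Cm.
    rewrite <- (split_ang k m Hk), cos_plus, <- (powsplit k m Hk). ring. }
  rewrite <- (is_series_unique _ _ H4). apply is_series_unique, Cm_series, Hx.
Qed.

Lemma AB_times : AA * BB + BB * AA = x * sin th / (1 - 2 * x * cos th + x ^ 2).
Proof.
  pose proof (is_series_mult _ _ _ _ ak_ser bk_ser ak_abs bk_abs) as H1.
  pose proof (is_series_mult _ _ _ _ bk_ser ak_ser bk_abs ak_abs) as H2.
  pose proof (is_series_plus _ _ _ _ H1 H2) as H3.
  assert (H4 : is_series (Sm x th) (AA * BB + BB * AA)).
  { eapply is_series_ext; [|exact H3].
    intro m. change (plus ?a ?b) with (a + b). cbv beta. rewrite <- plus_sum.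
    apply (conv_gen (fun k j => ak k * bk j + bk k * ak j) (Sm x th)).
    intros k Hk. unfold ak, bk, Sm.
    rewrite <- (split_ang k m Hk), sin_plus, <- (powsplit k m Hk). ring. }
  rewrite <- (is_series_unique _ _ H4). apply is_series_unique, Sm_series, Hx.
Qed.

Lemma AB_plus_ser : is_series Lm (AA * AA + BB * BB).
Proof.
  pose proof (is_series_mult _ _ _ _ ak_ser ak_ser ak_abs ak_abs) as H1.
  pose proof (is_series_mult _ _ _ _ bk_ser bk_ser bk_abs bk_abs) as H2.
  pose proof (is_series_plus _ _ _ _ H1 H2) as H3.
  eapply is_series_ext; [|exact H3].
  intro m. change (plus ?a ?b) with (a + b). cbv beta. rewrite <- plus_sum.
  unfold Lm. rewrite scal_sum. apply sum_eq. intros k Hk. unfold ak, bk.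
  replace ((INR k - INR (m - k)) * th) with (INR k * th - INR (m - k) * th) by ring.
  rewrite cos_minus, <- (powsplit k m Hk). ring.
Qed.

Lemma Lm_value : is_series Lm (/ sqrt (1 - 2 * x * cos th + x ^ 2)).
Proof.
  pose proof (D2_pos x th Hx) as HD.
  assert (HP : 0 <= AA * AA + BB * BB) by nra.
  assert (E : (AA * AA + BB * BB) ^ 2 = / (1 - 2 * x * cos th + x ^ 2)).
  { replace ((AA * AA + BB * BB) ^ 2) with ((AA * AA - BB * BB) ^ 2 + (AA * BB + BB * AA) ^ 2) by ring.
    rewrite AB_minus, AB_times.
    pose proof (cs1 th). field_simplify_eq; [|lra]. nra. }
  replace (/ sqrt (1 - 2 * x * cos th + x ^ 2)) with (AA * AA + BB * BB).
  - apply AB_plus_ser.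
  - rewrite <- sqrt_inv. rewrite <- E. rewrite sqrt_pow2; auto.
Qed.
End Leg.

Lemma telesc (al : R) N :
  2 * sin (al / 2) * sum_f_R0 (fun l => cos (INR l * al)) N =
  sin ((INR N + / 2) * al) + sin (al / 2).
Proof.
  induction N.
  - simpl. rewrite Rmult_0_l, cos_0.
    replace ((0 + / 2) * al) with (al / 2) by field. ring.
  - rewrite tech5, Rmult_plus_distr_l, IHN, S_INR.
    replace ((INR N + / 2) * al) with ((INR N + 1) * al - al / 2) by field.
    replace ((INR N + 1 + / 2) * al) with ((INR N + 1) * al + al / 2) by field.
    rewrite sin_minus, sin_plus. ring.
Qed.

Lemma cos_from_sin0 y : sin y = 0 -> cos (2 * y) = 1.
Proof. intro H. rewrite cos_2a_sin, H. ring. Qed.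

Lemma polygon_cos (n : nat) (z : Z) : (1 <= n)%nat ->
  0 <= sum_f_R0 (fun l => cos (IZR z * (2 * PI * INR l / INR n))) (pred n).
Proof.
  intro Hn.
  assert (HnR : 0 < INR n) by (apply lt_0_INR; lia).
  set (al := 2 * PI * IZR z / INR n).
  rewrite (sum_eq _ (fun l => cos (INR l * al))).
  2:{ intros i _. unfold al. f_equal. field. lra. }
  destruct (Req_dec (sin (al / 2)) 0) as [H0 | H0].
  - destruct (sin_eq_0_0 _ H0) as [k Hk].
    rewrite (sum_eq _ (fun _ => 1)).
    + rewrite sum_cte. pose proof (pos_INR (S (pred n))). nra.
    + intros i _. replace (INR i * al) with (2 * (IZR (Z.of_nat i * k) * PI)).
      * apply cos_from_sin0, sin_eq_0_1. eauto.
      * rewrite mult_IZR, <- INR_IZR_INZ.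
        replace al with (2 * (al / 2)) by field. rewrite Hk. ring.
  - pose proof (telesc al (pred n)) as T.
    replace (INR (pred n)) with (INR n - 1) in T
      by (rewrite <- (Nat.succ_pred_pos n) at 1 by lia; rewrite S_INR; ring).
    replace ((INR n - 1 + / 2) * al) with (2 * (IZR z * PI) - al / 2) in T
      by (unfold al; field; lra).
    rewrite sin_minus, (sin_eq_0_1 (2 * (IZR z * PI))) in T.
    2:{ exists (2 * z)%Z. rewrite mult_IZR. simpl. ring. }
    assert (Hz : sin (IZR z * PI) = 0) by (apply sin_eq_0_1; eauto).
    rewrite (cos_from_sin0 _ Hz) in T.
    assert (sum_f_R0 (fun l => cos (INR l * al)) (pred n) = 0).
    { apply (Rmult_eq_reg_l (2 * sin (al / 2))). lra. lra. }
    lra.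
Qed.

Lemma series_fin_sum (u : nat -> nat -> R) (v : nat -> R) N :
  (forall l, (l <= N)%nat -> is_series (u l) (v l)) ->
  is_series (fun m => sum_f_R0 (fun l => u l m) N) (sum_f_R0 v N).
Proof.
  induction N; intro H.
  - simpl. apply H; lia.
  - simpl. apply (is_series_plus (fun m => sum_f_R0 (fun l => u l m) N) (u (S N))).
    + apply IHN. intros; apply H; lia.
    + apply H; lia.
Qed.

Lemma sum_swap (f : nat -> nat -> R) N M :
  sum_f_R0 (fun l => sum_f_R0 (fun k => f l k) M) N =
  sum_f_R0 (fun k => sum_f_R0 (fun l => f l k) N) M.
Proof.
  induction N.
  - reflexivity.
  - simpl. rewrite IHN, <- plus_sum. reflexivity.
Qed.

Lemma series_ge_partial (a : nat -> R) l N :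
  (forall k, 0 <= a k) -> is_series a l -> sum_f_R0 a N <= l.
Proof.
  intros Ha H. apply is_series_Reals in H.
  apply (growing_ineq (fun N => sum_f_R0 a N)); [|exact H].
  intro k. simpl. specialize (Ha (S k)). lra.
Qed.

Section Poly.
Variable n : nat.
Hypothesis Hn : (1 <= n)%nat.

Definition thl (l : nat) := 2 * PI * INR l / INR n.
Definition Dl (x : R) (l : nat) := 1 - 2 * x * cos (thl l) + x ^ 2.
Definition Hf (x : R) := sum_f_R0 (fun l => / sqrt (Dl x l)) (pred n).
Definition coef (m : nat) :=
  sum_f_R0 (fun l => sum_f_R0 (fun k => bb k * bb (m - k) * cos ((INR k - INR (m - k)) * thl l)) m) (pred n).

Lemma Hf_series x : 0 <= x < 1 -> is_series (fun m => x ^ m * coef m) (Hf x).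
Proof.
  intro Hx. unfold Hf.
  eapply is_series_ext; [|apply (series_fin_sum (fun l m => Lm x (thl l) m))].
  - intro m. simpl. unfold Lm, coef. rewrite scal_sum. apply sum_eq. intros; ring.
  - intros l _. apply Lm_value. exact Hx.
Qed.

Lemma coef_swap m : coef m =
  sum_f_R0 (fun k => bb k * bb (m - k) *
     sum_f_R0 (fun l => cos (IZR (Z.of_nat k - Z.of_nat (m - k)) * (2 * PI * INR l / INR n))) (pred n)) m.
Proof.
  unfold coef. rewrite sum_swap. apply sum_eq. intros k _.
  rewrite scal_sum. apply sum_eq. intros l _.
  rewrite minus_IZR, <- !INR_IZR_INZ. unfold thl. ring_simplify. reflexivity.
Qed.

Lemma coef_nonneg m : 0 <= coef m.
Proof.
  rewrite coef_swap. apply cond_pos_sum. intro k.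
  apply Rmult_le_pos.
  - pose proof (bb_pos k); pose proof (bb_pos (m - k)); nra.
  - apply polygon_cos, Hn.
Qed.

Lemma npred : INR (S (pred n)) = INR n.
Proof. f_equal. lia. Qed.

Lemma coef0 : coef 0 = INR n.
Proof.
  unfold coef. simpl. rewrite (sum_eq _ (fun _ => 1)).
  - rewrite sum_cte, npred. ring.
  - intros. simpl. replace ((0 - 0) * thl i) with 0 by ring. rewrite cos_0. ring.
Qed.

Lemma coef2 : INR n / 4 <= coef 2.
Proof.
  rewrite coef_swap.
  set (g := fun k => bb k * bb (2 - k) *
     sum_f_R0 (fun l => cos (IZR (Z.of_nat k - Z.of_nat (2 - k)) * (2 * PI * INR l / INR n))) (pred n)).
  assert (E : sum_f_R0 g 2 = g 0%nat + g 1%nat + g 2%nat) by reflexivity.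
  assert (H1 : forall k, 0 <= g k).
  { intros k. apply Rmult_le_pos.
    - pose proof (bb_pos k); pose proof (bb_pos (2 - k)); nra.
    - apply polygon_cos, Hn. }
  assert (E1 : g 1%nat = INR n / 4).
  { unfold g. replace (2 - 1)%nat with 1%nat by reflexivity.
    rewrite (sum_eq _ (fun _ => 1)).
    - rewrite sum_cte, npred. simpl bb. field.
    - intros. replace (IZR (Z.of_nat 1 - Z.of_nat 1)) with 0 by (simpl; ring).
      rewrite Rmult_0_l. apply cos_0. }
  rewrite E, E1. pose proof (H1 0%nat). pose proof (H1 2%nat). lra.
Qed.

Lemma Hf_lower x : 0 <= x < 1 -> INR n + INR n / 4 * x ^ 2 <= Hf x.
Proof.
  intro Hx. pose proof (series_ge_partial _ _ 2 (fun k => Rmult_le_pos _ _ (pow_le x k ltac:(lra)) (coef_nonneg k)) (Hf_series x Hx)) as H.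
  simpl sum_f_R0 in H. rewrite coef0 in H.
  pose proof coef2. pose proof (coef_nonneg 1).
  assert (0 <= x * coef 1) by nra.
  assert (INR n / 4 * x ^ 2 <= x * (x * 1) * coef 2) by (simpl; nra).
  simpl in H. lra.
Qed.

Lemma Hf_mono x y : 0 <= x -> x <= y -> y < 1 -> Hf x <= Hf y.
Proof.
  intros. rewrite <- (is_series_unique _ _ (Hf_series x ltac:(lra))).
  rewrite <- (is_series_unique _ _ (Hf_series y ltac:(lra))).
  apply Series_le.
  - intro m. pose proof (coef_nonneg m). split.
    + apply Rmult_le_pos; [apply pow_le; lra| lra].
    + apply Rmult_le_compat_r; [lra|]. apply pow_incr; lra.
  - eexists. apply Hf_series. lra.
Qed.

Lemma Dl_pos x l : 0 <= x < 1 -> 0 < Dl x l.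
Proof. intro. apply D2_pos. exact H. Qed.

Lemma term_derive x l : 0 <= x < 1 ->
  is_derive (fun y => / sqrt (Dl y l)) x ((cos (thl l) - x) / (Dl x l * sqrt (Dl x l))).
Proof.
  intro Hx. pose proof (Dl_pos x l Hx) as HD. unfold Dl in *.
  auto_derive;
  replace (1 + - (2 * x * cos (thl l)) + x * (x * 1)) with (1 - 2 * x * cos (thl l) + x ^ 2) by ring.
  - split; [lra|]. split; [|auto]. apply Rgt_not_eq, sqrt_lt_R0. lra.
  - pose proof (sqrt_lt_R0 _ HD). pose proof (sqrt_sqrt _ (Rlt_le _ _ HD)).
    rewrite H0. field. lra.
Qed.

Definition Gf (x : R) := sum_f_R0 (fun l => (cos (thl l) - x) / (Dl x l * sqrt (Dl x l))) (pred n).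

Lemma Hf_derive x : 0 <= x < 1 -> is_derive Hf x (Gf x).
Proof.
  intro Hx. unfold Hf, Gf. generalize (pred n). induction n0.
  - simpl. apply term_derive, Hx.
  - simpl. apply (is_derive_plus (fun y => sum_f_R0 (fun l => / sqrt (Dl y l)) n0) (fun y => / sqrt (Dl y (S n0)))).
    + exact IHn0.
    + apply term_derive, Hx.
Qed.

Lemma deriv_nonneg (f : R -> R) x l d : 0 < d -> is_derive f x l ->
  (forall y, x < y < x + d -> f x <= f y) -> 0 <= l.
Proof.
  intros Hd Hder Hm. apply is_derive_Reals in Hder.
  destruct (Rle_or_lt 0 l) as [|Hl]; [auto|].
  destruct (Hder (- l) ltac:(lra)) as [del Hdel].
  set (h := Rmin (del / 2) (d / 2)).
  assert (0 < h) by (unfold h; apply Rmin_glb_lt; pose proof (cond_pos del); lra).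
  assert (h <= del / 2) by apply Rmin_l. assert (h <= d / 2) by apply Rmin_r.
  specialize (Hdel h ltac:(lra)). rewrite Rabs_pos_eq in Hdel by lra.
  specialize (Hdel ltac:(pose proof (cond_pos del); lra)).
  specialize (Hm (x + h) ltac:(lra)).
  assert (0 <= (f (x + h) - f x) / h) by (apply Rmult_le_pos; [lra| left; apply Rinv_0_lt_compat; lra]).
  apply Rabs_lt_between in Hdel. lra.
Qed.

Lemma Gf_nonneg x : 0 <= x < 1 -> 0 <= Gf x.
Proof.
  intro Hx. apply (deriv_nonneg Hf x (Gf x) (1 - x)); [lra| apply Hf_derive, Hx |].
  intros y Hy. apply Hf_mono; lra.
Qed.

Lemma outer_sum x : 0 < x < 1 ->
  INR n < sum_f_R0 (fun l => (1 - x * cos (thl l)) / (Dl x l * sqrt (Dl x l))) (pred n).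
Proof.
  intro Hx.
  rewrite (sum_eq _ (fun l => / sqrt (Dl x l) + ((cos (thl l) - x) / (Dl x l * sqrt (Dl x l))) * x)).
  - rewrite plus_sum, <- scal_sum. fold (Hf x). fold (Gf x).
    pose proof (Gf_nonneg x ltac:(lra)). pose proof (Hf_lower x ltac:(lra)).
    assert (0 < INR n) by (apply lt_0_INR; lia).
    assert (0 < INR n / 4 * x ^ 2) by (simpl; apply Rmult_lt_0_compat; [lra| nra]).
    nra.
  - intros l _. pose proof (Dl_pos x l ltac:(lra)).
    pose proof (sqrt_lt_R0 _ H). pose proof (sqrt_sqrt _ (Rlt_le _ _ H)).
    unfold Dl in *. field. lra.
Qed.
End Poly.

Lemma D2_trig (X Y : R) : Derive_n (fun t => X * cos t - Y * sin t) 2 0 = - X.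
Proof.
  simpl.
  rewrite (Derive_ext _ (fun t => - X * sin t - Y * cos t)).
  - apply is_derive_unique. auto_derive; auto. rewrite sin_0, cos_0. ring.
  - intro t. apply is_derive_unique. auto_derive; auto. ring.
Qed.

Lemma Dmotx n r1 r2 k : Derive_n (motx n r1 r2 k) 2 0 = - fst (pos n r1 r2 k).
Proof. unfold motx. apply D2_trig. Qed.

Lemma split3 (f : nat -> R) n : (1 <= n)%nat ->
  sum_f_R0 f (2 * n) = f 0%nat + sum_f_R0 (fun i => f (S i)) (pred n)
                       + sum_f_R0 (fun i => f (S n + i)%nat) (pred n).
Proof.
  intro Hn. rewrite decomp_sum by lia.
  rewrite (tech2 (fun i => f (S i)) (pred n) (pred (2 * n))) by lia.
  rewrite Rplus_assoc. f_equal. f_equal.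
  - replace (pred (2 * n) - S (pred n))%nat with (pred n) by lia.
    apply sum_eq. intros i _. f_equal. lia.
Qed.

Section Geo.
Variables (n : nat) (r1 r2 : R).
Hypothesis Hn : (1 <= n)%nat.

Definition X j := fst (pos n r1 r2 j).
Definition Y j := snd (pos n r1 r2 j).
Definition gg (k j : nat) : R :=
  if Nat.eqb j k then 0
  else (X j - X k) / (sqrt ((X j - X k) ^ 2 + (Y j - Y k) ^ 2)) ^ 3.

Lemma force0 m0 m1 m2 k :
  force n r1 r2 m0 m1 m2 (motx n r1 r2) k 0 =
  sum_f_R0 (fun j => mass n m0 m1 m2 k * mass n m0 m1 m2 j * gg k j) (2 * n).
Proof.
  unfold force. apply sum_eq. intros j _. unfold gg.
  destruct (Nat.eqb j k). ring.
  assert (Ex : forall i, motx n r1 r2 i 0 = X i).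
  { intro i. unfold motx, X. rewrite cos_0, sin_0. ring. }
  assert (Ey : forall i, moty n r1 r2 i 0 = Y i).
  { intro i. unfold moty, Y. rewrite cos_0, sin_0. ring. }
  unfold dist_at. rewrite !Ex, !Ey. unfold Rdiv. ring.
Qed.

Lemma pos0 : pos n r1 r2 0 = (0, 0).
Proof. reflexivity. Qed.
Lemma pos_S i : (i < n)%nat -> pos n r1 r2 (S i) = vertex n r1 i.
Proof.
  intro H. unfold pos. simpl Nat.eqb. replace (Nat.leb (S i) n) with true
    by (symmetry; apply Nat.leb_le; lia). f_equal. lia.
Qed.
Lemma pos_Sn i : pos n r1 r2 (S n + i) = vertex n r2 i.
Proof.
  unfold pos. simpl Nat.eqb. replace (Nat.leb (S n + i) n) with false
    by (symmetry; apply Nat.leb_gt; lia). f_equal. lia.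
Qed.
Lemma mass_S m0 m1 m2 i : (i < n)%nat -> mass n m0 m1 m2 (S i) = m1.
Proof.
  intro H. unfold mass. simpl Nat.eqb. replace (Nat.leb (S i) n) with true
    by (symmetry; apply Nat.leb_le; lia). reflexivity.
Qed.
Lemma mass_Sn m0 m1 m2 i : mass n m0 m1 m2 (S n + i) = m2.
Proof.
  unfold mass. simpl Nat.eqb. replace (Nat.leb (S n + i) n) with false
    by (symmetry; apply Nat.leb_gt; lia). reflexivity.
Qed.
Lemma vertex0 r : vertex n r 0 = (r, 0).
Proof.
  unfold vertex. simpl INR. replace (2 * PI * 0 / INR n) with 0.
  rewrite cos_0, sin_0. f_equal; ring.
  unfold Rdiv; ring.
Qed.

Definition cth (i : nat) := cos (2 * PI * INR i / INR n).
Definition sth (i : nat) := sin (2 * PI * INR i / INR n).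

Lemma X_S i : (i < n)%nat -> X (S i) = r1 * cth i.
Proof. intro. unfold X. rewrite pos_S by lia. reflexivity. Qed.
Lemma Y_S i : (i < n)%nat -> Y (S i) = r1 * sth i.
Proof. intro. unfold Y. rewrite pos_S by lia. reflexivity. Qed.
Lemma X_Sn i : X (S n + i) = r2 * cth i.
Proof. unfold X. rewrite pos_Sn. reflexivity. Qed.
Lemma Y_Sn i : Y (S n + i) = r2 * sth i.
Proof. unfold Y. rewrite pos_Sn. reflexivity. Qed.
Lemma X1 : X 1 = r1.
Proof. unfold X. rewrite (pos_S 0) by lia. rewrite vertex0. reflexivity. Qed.
Lemma Y1 : Y 1 = 0.
Proof. unfold Y. rewrite (pos_S 0) by lia. rewrite vertex0. reflexivity. Qed.
Lemma XSn : X (S n) = r2.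
Proof. unfold X. rewrite <- (Nat.add_0_r (S n)), pos_Sn, vertex0. reflexivity. Qed.
Lemma YSn : Y (S n) = 0.
Proof. unfold Y. rewrite <- (Nat.add_0_r (S n)), pos_Sn, vertex0. reflexivity. Qed.

Definition T1 := sum_f_R0 (fun i => gg 1 (S i)) (pred n).
Definition U1 := sum_f_R0 (fun i => gg 1 (S n + i)) (pred n).
Definition T2 := sum_f_R0 (fun i => gg (S n) (S i)) (pred n).
Definition U2 := sum_f_R0 (fun i => gg (S n) (S n + i)) (pred n).

Lemma eq_body1 m0 m1 m2 :
  0 < r1 -> 0 < m1 -> is_solution n r1 r2 m0 m1 m2 ->
  - r1 = - m0 / r1 ^ 2 + m1 * T1 + m2 * U1.
Proof.
  intros Hr Hm Hs. destruct (Hs 1%nat 0 ltac:(lia)) as [H _].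
  rewrite Dmotx, force0, split3 in H by lia.
  fold (X 1) in H. rewrite X1 in H.
  unfold T1, U1.
  rewrite (sum_eq _ (fun i => gg 1 (S i) * (mass n m0 m1 m2 1 * m1))) in H.
  2:{ intros i Hi. rewrite (mass_S m0 m1 m2 i) by lia. ring. }
  rewrite (sum_eq (fun i => mass n m0 m1 m2 1 * mass n m0 m1 m2 (S n + i) * gg 1 (S n + i))
             (fun i => gg 1 (S n + i) * (mass n m0 m1 m2 1 * m2))) in H.
  2:{ intros i Hi. rewrite (mass_Sn m0 m1 m2 i). ring. }
  rewrite <- !scal_sum in H.
  replace (mass n m0 m1 m2 1) with m1 in H by (rewrite (mass_S m0 m1 m2 0) by lia; reflexivity).
  replace (mass n m0 m1 m2 0) with m0 in H by reflexivity.
  assert (G : gg 1 0 = - / r1 ^ 2).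
  { unfold gg. simpl Nat.eqb. rewrite X1, Y1. unfold X, Y. rewrite pos0. simpl fst; simpl snd.
    replace ((0 - r1) ^ 2 + (0 - 0) ^ 2) with (r1 ^ 2) by ring.
    rewrite sqrt_pow2 by lra. field. lra. }
  rewrite G in H.
  apply (Rmult_eq_reg_l m1); [|lra]. rewrite H. field. lra.
Qed.

Lemma eq_body2 m0 m1 m2 :
  0 < r2 -> 0 < m2 -> is_solution n r1 r2 m0 m1 m2 ->
  - r2 = - m0 / r2 ^ 2 + m1 * T2 + m2 * U2.
Proof.
  intros Hr Hm Hs. destruct (Hs (S n) 0 ltac:(lia)) as [H _].
  rewrite Dmotx, force0, split3 in H by lia.
  fold (X (S n)) in H. rewrite XSn in H.
  unfold T2, U2.
  rewrite (sum_eq _ (fun i => gg (S n) (S i) * (mass n m0 m1 m2 (S n) * m1))) in H.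
  2:{ intros i Hi. rewrite (mass_S m0 m1 m2 i) by lia. ring. }
  rewrite (sum_eq (fun i => mass n m0 m1 m2 (S n) * mass n m0 m1 m2 (S n + i) * gg (S n) (S n + i))
             (fun i => gg (S n) (S n + i) * (mass n m0 m1 m2 (S n) * m2))) in H.
  2:{ intros i Hi. rewrite (mass_Sn m0 m1 m2 i). ring. }
  rewrite <- !scal_sum in H.
  replace (mass n m0 m1 m2 (S n)) with m2 in H by (rewrite <- (Nat.add_0_r (S n)), mass_Sn; reflexivity).
  replace (mass n m0 m1 m2 0) with m0 in H by reflexivity.
  assert (G : gg (S n) 0 = - / r2 ^ 2).
  { unfold gg. simpl Nat.eqb. rewrite XSn, YSn. unfold X, Y. rewrite pos0. simpl fst; simpl snd.
    replace ((0 - r2) ^ 2 + (0 - 0) ^ 2) with (r2 ^ 2) by ring.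
    rewrite sqrt_pow2 by lra. field. lra. }
  rewrite G in H.
  apply (Rmult_eq_reg_l m2); [|lra]. rewrite H. field. lra.
Qed.
End Geo.

Lemma scale (r a b : R) : 0 < r ->
  (r * a) / (sqrt ((r * a) ^ 2 + (r * b) ^ 2)) ^ 3 = a / (sqrt (a ^ 2 + b ^ 2)) ^ 3 / r ^ 2.
Proof.
  intro Hr.
  replace ((r * a) ^ 2 + (r * b) ^ 2) with (r ^ 2 * (a ^ 2 + b ^ 2)) by ring.
  rewrite sqrt_mult by (try apply pow2_ge_0; nra).
  rewrite sqrt_pow2 by lra.
  destruct (Req_dec (sqrt (a ^ 2 + b ^ 2)) 0) as [E|E].
  - rewrite E. replace ((r * 0) ^ 3) with 0 by ring. replace (0 ^ 3) with 0 by ring.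
    unfold Rdiv. rewrite Rinv_0. ring.
  - field. split; lra.
Qed.

Lemma sqrt3 (D : R) : 0 <= D -> sqrt D ^ 3 = D * sqrt D.
Proof. intro. replace (sqrt D ^ 3) with ((sqrt D * sqrt D) * sqrt D) by ring. rewrite sqrt_sqrt; auto. Qed.

Section Rel.
Variables (n : nat) (r1 r2 : R).
Hypothesis Hn : (1 <= n)%nat.
Hypothesis H1 : 0 < r1.
Hypothesis H12 : r1 < r2.

Lemma cs i : cth n i ^ 2 + sth n i ^ 2 = 1.
Proof. unfold cth, sth. rewrite <- (sin2_cos2 (2 * PI * INR i / INR n)). unfold Rsqr. ring. Qed.

Lemma eqb_Sn i : Nat.eqb (S n + i) (S n) = Nat.eqb i 0.
Proof.
  destruct i. rewrite Nat.add_0_r, Nat.eqb_refl. reflexivity.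
  simpl. apply Nat.eqb_neq. lia.
Qed.

Lemma R1 : r1 ^ 2 * T1 n r1 r2 = r2 ^ 2 * U2 n r1 r2.
Proof.
  unfold T1, U2. rewrite !scal_sum. apply sum_eq. intros i Hi.
  unfold gg. rewrite eqb_Sn. simpl (Nat.eqb (S i) 1).
  destruct (Nat.eqb i 0). ring.
  rewrite X_S, Y_S, X1, Y1, X_Sn, Y_Sn, XSn, YSn by lia.
  replace (r1 * cth n i - r1) with (r1 * (cth n i - 1)) by ring.
  replace (r1 * sth n i - 0) with (r1 * sth n i) by ring.
  replace (r2 * cth n i - r2) with (r2 * (cth n i - 1)) by ring.
  replace (r2 * sth n i - 0) with (r2 * sth n i) by ring.
  rewrite !scale by lra.
  assert (K : forall q r, r <> 0 -> q / r ^ 2 * r ^ 2 = q).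
  { intros q r Hr. field. auto. }
  rewrite !K by lra. reflexivity.
Qed.

Definition xx := r1 / r2.

Lemma R2 : U1 n r1 r2 = Gf n (r1 / r2) / r2 ^ 2.
Proof.
  replace (Gf n (r1 / r2) / r2 ^ 2) with (/ r2 ^ 2 * Gf n (r1 / r2)) by (unfold Rdiv; ring).
  unfold U1, Gf. rewrite scal_sum. apply sum_eq. intros i Hi.
  unfold gg. replace (Nat.eqb (S n + i) 1) with false by (symmetry; apply Nat.eqb_neq; lia).
  rewrite X_Sn, Y_Sn, X1, Y1 by lia.
  replace (r2 * cth n i - r1) with (r2 * (cth n i - r1 / r2)) by (field; lra).
  replace (r2 * sth n i - 0) with (r2 * sth n i) by ring.
  rewrite scale by lra.
  replace ((cth n i - r1 / r2) ^ 2 + sth n i ^ 2) with (Dl n (r1 / r2) i).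
  2:{ unfold Dl, thl. pose proof (cs i). unfold cth, sth in *. nra. }
  rewrite sqrt3. 2:{ left; apply Dl_pos. split. apply Rlt_le, Rdiv_lt_0_compat; lra.
                     apply (Rmult_lt_reg_r r2); [lra|]. unfold Rdiv; rewrite Rmult_assoc, Rinv_l; lra. }
  unfold cth, thl. unfold Rdiv. ring.
Qed.

Lemma xx_bounds : 0 <= r1 / r2 < 1.
Proof.
  split. apply Rlt_le, Rdiv_lt_0_compat; lra.
  apply (Rmult_lt_reg_r r2); [lra|]. unfold Rdiv; rewrite Rmult_assoc, Rinv_l; lra.
Qed.

Lemma R3 : r2 ^ 2 * T2 n r1 r2 = -1 * sum_f_R0 (fun l => (1 - (r1 / r2) * cos (thl n l)) / (Dl n (r1 / r2) l * sqrt (Dl n (r1 / r2) l))) (pred n).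
Proof.
  unfold T2. rewrite !scal_sum. apply sum_eq. intros i Hi.
  unfold gg. replace (Nat.eqb (S i) (S n)) with false by (symmetry; apply Nat.eqb_neq; lia).
  rewrite X_S, Y_S, XSn, YSn by lia.
  replace (r1 * cth n i - r2) with (r2 * (r1 / r2 * cth n i - 1)) by (field; lra).
  replace (r1 * sth n i - 0) with (r2 * (r1 / r2 * sth n i)) by (field; lra).
  rewrite scale by lra.
  replace ((r1 / r2 * cth n i - 1) ^ 2 + (r1 / r2 * sth n i) ^ 2) with (Dl n (r1 / r2) i).
  2:{ unfold Dl, thl. pose proof (cs i). unfold cth, sth in *. nra. }
  pose proof (Dl_pos n (r1 / r2) i xx_bounds) as HD.
  pose proof (sqrt_lt_R0 _ HD).
  rewrite sqrt3 by lra.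
  unfold cth, thl. field. repeat split; lra.
Qed.
End Rel.

Theorem proposition4 (n : nat) (rho1 rho2 : R) :
  (2 <= n)%nat -> 0 < rho1 -> rho1 < rho2 -> ~ really_perverse n rho1 rho2.
Proof.
  intros Hn H1 H12 [m0 [m1 [m2 [m0' [m1' [m2' [Hm [Hm' [Hne [Htot [_ [Hs Hs']]]]]]]]]]]].
  destruct Hm as [p0 [p1 [p2 _]]]. destruct Hm' as [p0' [p1' [p2' _]]].
  assert (Hn1 : (1 <= n)%nat) by lia.
  pose proof (eq_body1 n rho1 rho2 Hn1 m0 m1 m2 H1 p1 Hs) as E1.
  pose proof (eq_body1 n rho1 rho2 Hn1 m0' m1' m2' H1 p1' Hs') as E1'.
  pose proof (eq_body2 n rho1 rho2 Hn1 m0 m1 m2 ltac:(lra) p2 Hs) as E2.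
  pose proof (eq_body2 n rho1 rho2 Hn1 m0' m1' m2' ltac:(lra) p2' Hs') as E2'.
  unfold total_mass in Htot.
  pose proof (R1 n rho1 rho2 Hn1 H1 H12) as HR1.
  pose proof (R2 n rho1 rho2 Hn1 H1 H12) as HR2.
  pose proof (R3 n rho1 rho2 Hn1 H1 H12) as HR3.
  pose proof (xx_bounds rho1 rho2 H1 H12) as Hx.
  assert (Hx' : 0 < rho1 / rho2 < 1) by (split; [apply Rdiv_lt_0_compat; lra | lra]).
  pose proof (outer_sum n Hn1 (rho1 / rho2) Hx') as HO.
  pose proof (Gf_nonneg n Hn1 (rho1 / rho2) Hx) as HG.
  set (N := INR n) in *.
  set (sg := rho1 ^ 2 * T1 n rho1 rho2) in *.
  set (q := N + rho1 ^ 2 * U1 n rho1 rho2).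
  set (r := N + rho2 ^ 2 * T2 n rho1 rho2).
  assert (Hq : 0 < q).
  { unfold q. rewrite HR2. assert (0 < N) by (unfold N; apply lt_0_INR; lia).
    assert (0 <= rho1 ^ 2 * (Gf n (rho1 / rho2) / rho2 ^ 2)).
    { apply Rmult_le_pos. nra. apply Rmult_le_pos. lra. left; apply Rinv_0_lt_compat; nra. }
    lra. }
  assert (Hr : r < 0) by (unfold r; rewrite HR3; lra).
  set (d0 := m0 - m0'). set (d1 := m1 - m1'). set (d2 := m2 - m2').
  assert (Ht : d0 = - N * (d1 + d2)) by (unfold d0, d1, d2; lra).
  assert (Ea : 0 = - d0 + d1 * sg + d2 * (rho1 ^ 2 * U1 n rho1 rho2)).
  { unfold d0, d1, d2, sg.
    assert (rho1 ^ 2 * (- rho1) = rho1 ^ 2 * (- m0 / rho1 ^ 2 + m1 * T1 n rho1 rho2 + m2 * U1 n rho1 rho2)) by (rewrite <- E1; ring).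
    assert (rho1 ^ 2 * (- rho1) = rho1 ^ 2 * (- m0' / rho1 ^ 2 + m1' * T1 n rho1 rho2 + m2' * U1 n rho1 rho2)) by (rewrite <- E1'; ring).
    assert (K : forall a, rho1 ^ 2 * (- a / rho1 ^ 2) = - a) by (intro; field; lra).
    rewrite !Rmult_plus_distr_l, K in H, H0. lra. }
  assert (Eb : 0 = - d0 + d1 * (rho2 ^ 2 * T2 n rho1 rho2) + d2 * sg).
  { unfold d0, d1, d2. rewrite HR1.
    assert (rho2 ^ 2 * (- rho2) = rho2 ^ 2 * (- m0 / rho2 ^ 2 + m1 * T2 n rho1 rho2 + m2 * U2 n rho1 rho2)) by (rewrite <- E2; ring).
    assert (rho2 ^ 2 * (- rho2) = rho2 ^ 2 * (- m0' / rho2 ^ 2 + m1' * T2 n rho1 rho2 + m2' * U2 n rho1 rho2)) by (rewrite <- E2'; ring).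
    assert (K : forall a, rho2 ^ 2 * (- a / rho2 ^ 2) = - a) by (intro; field; lra).
    rewrite !Rmult_plus_distr_l, K in H, H0. lra. }
  set (p := N + sg).
  assert (Ea' : p * d1 + q * d2 = 0) by (unfold p, q; rewrite Ht in Ea; lra).
  assert (Eb' : r * d1 + p * d2 = 0) by (unfold p, r; rewrite Ht in Eb; lra).
  assert (Hdet : 0 < p * p - q * r) by nra.
  assert (Hd1 : (p * p - q * r) * d1 = 0).
  { replace ((p * p - q * r) * d1) with (p * (p * d1 + q * d2) - q * (r * d1 + p * d2)) by ring.
    rewrite Ea', Eb'. ring. }
  assert (Hd2 : (p * p - q * r) * d2 = 0).
  { replace ((p * p - q * r) * d2) with (p * (r * d1 + p * d2) - r * (p * d1 + q * d2)) by ring.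
    rewrite Ea', Eb'. ring. }
  apply Rmult_integral in Hd1. apply Rmult_integral in Hd2.
  destruct Hd1 as [Hd1|Hd1]; [lra|]. destruct Hd2 as [Hd2|Hd2]; [lra|].
  assert (Hd0 : d0 = 0) by (rewrite Ht, Hd1, Hd2; ring).
  apply Hne. unfold d1, d2, d0 in *. f_equal; [f_equal|]; lra.
Qed.
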